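(* Let $\mathbb{F}$ be a field of odd characteristic that is algebraic over its prime subfield. Then the following are equivalent: (1) $\mathbb{F}=\mathbb{F}_5$; (2) $\operatorname{Aut}(\mathbb{F})\subsetneq SD(\mathbb{F})$; (4) a square root of $-1$ in $\mathbb{F}$ generates the multiplicative group $\mathbb{F}^\times$. Moreover, if $\mathbb{F}$ is finite, these are also equivalent to: (3) the map $\mathbb{F}\to\mathbb{F}$ which fixes every square in $\mathbb{F}$ and sends every non-square $w$ to $-w$ is an SD-map.
   Context: A map $f:\mathbb{F}\to\widetilde{\mathbb{F}}$ between fields is called an SD-map if for all $x\neq y$ in $\mathbb{F}$ one has $f(x)\neq f(y)$ and \[ f\left(\frac{x+y}{x-y}\right)=\frac{f(x)+f(y)}{f(x)-f(y)}. \] For a field $\mathbb{F}$, $SD(\mathbb{F})$ denotes the set of surjective SD-maps $\mathbb{F}\to\mathbb{F}$, and $\operatorname{Aut}(\mathbb{F})$ its group of field automorphisms; $\operatorname{Aut}(\mathbb{F})\subseteq SD(\mathbb{F})$ always. *)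

(* Defs.v *)
From HB Require Import structures.
From mathcomp Require Import all_boot all_order all_algebra all_field.
From mathcomp Require Import boolp.
Set Implicit Arguments. Unset Strict Implicit. Unset Printing Implicit Defensive.
Import Order.TTheory GRing.Theory.
Local Open Scope ring_scope.

Definition SD_map (F F' : fieldType) (f : F -> F') : Prop :=
  forall x y : F, x != y ->
    f x != f y /\ f ((x + y) / (x - y)) = (f x + f y) / (f x - f y).

Definition in_SD (F : fieldType) (f : F -> F) : Prop :=
  SD_map f /\ forall y : F, exists x, f x = y.

Definition is_field_aut (F : fieldType) (f : F -> F) : Prop :=
  [/\ forall x y, f (x + y) = f x + f y,
      forall x y, f (x * y) = f x * f y,
      f 1 = 1 & bijective f].

Definition odd_char (F : fieldType) : Prop :=
  exists p : nat, p \in [pchar F] /\ p != 2%N.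

(* elements of the prime subfield (in positive characteristic it is exactly
   the set of the n%:R) *)
Definition in_prime_subfield (F : fieldType) (c : F) : Prop :=
  exists n : nat, c = n%:R.

Definition algebraic_over_prime (F : fieldType) : Prop :=
  forall x : F, exists q : {poly F},
    [/\ q != 0, forall i, in_prime_subfield q`_i & root q x].

Definition finite_field (F : fieldType) : Prop :=
  exists s : seq F, forall x : F, x \in s.

Definition is_square (F : fieldType) (x : F) : Prop := exists y : F, y ^+ 2 = x.

Definition sq_flip (F : fieldType) (x : F) : F :=
  if `[< is_square x >] then x else - x.

(* Main.v *)
Require Import Defs.
From HB Require Import structures.
From mathcomp Require Import all_boot all_order all_algebra all_field.
From mathcomp Require Import boolp.
From mathcomp Require Import ring zify.
Import GRing.Theory.
Local Open Scope ring_scope.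
Set Implicit Arguments. Unset Strict Implicit. Unset Printing Implicit Defensive.


Lemma SD_inj (F : fieldType) (f : F -> F) : SD_map f -> forall x y, f x = f y -> x = y.
Proof.
move=> hSD x y e; apply/eqP; apply: contraLR (introT eqP e) => nxy.
by have [h _] := hSD x y nxy.
Qed.

Lemma SD_f0 (F : fieldType) (f : F -> F) : SD_map f -> (2:F) != 0 -> f 0 = 0.
Proof.
move=> hSD h2.
have n10 : (1:F) != 0 by exact: oner_neq0.
have nm10 : (-1:F) != 0 by rewrite oppr_eq0.
have n1m1 : (1:F) != -1.
  apply: contraNneq h2 => e. by rewrite -[2]/(1+1) {2}e subrr.
have [hd1 e1] := hSD 1 0 n10.
have [hd2 e2] := hSD (-1) 0 nm10.
rewrite addr0 subr0 divff // in e1.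
rewrite addr0 subr0 divff // in e2.
have hd3 : f 1 != f (-1) by have [] := hSD 1 (-1) n1m1.
apply/eqP; apply: contraNT hd3 => hz.
set z := f 0 in hd1 hd2 e1 e2 hz *.
set a := f 1 in hd1 e1 e2 *; set b := f (-1) in hd2 e2 *.
have ha : a - z != 0 by rewrite subr_eq0.
have hb : b - z != 0 by rewrite subr_eq0.
have : (a + z) / (a - z) = (b + z) / (b - z) by rewrite -e1 -e2.
move/eqP; rewrite eqr_div // => /eqP E.
have : 2 * z * (b - a) = 0.
  have -> : 2 * z * (b - a) = (a + z) * (b - z) - (b + z) * (a - z) by ring.
  by rewrite E subrr.
move/eqP; rewrite !mulf_eq0 (negbTE h2) (negbTE hz) /= subr_eq0 => /eqP ->.
by [].
Qed.

Lemma SD_f1 (F : fieldType) (f : F -> F) : SD_map f -> (2:F) != 0 -> f 1 = 1.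
Proof.
move=> hSD h2; have f0 := SD_f0 hSD h2.
have [hd e] := hSD 1 0 (oner_neq0 F).
by rewrite addr0 subr0 divff ?oner_neq0 // f0 addr0 subr0 divff // -f0 in e *.
Qed.

Lemma SD_fm1 (F : fieldType) (f : F -> F) : SD_map f -> (2:F) != 0 -> f (-1) = -1.
Proof.
move=> hSD h2; have f0 := SD_f0 hSD h2; have f1 := SD_f1 hSD h2.
have n01 : (0:F) != 1 by rewrite eq_sym oner_neq0.
have [hd e] := hSD 0 1 n01.
rewrite add0r sub0r f0 f1 add0r sub0r in e.
by move: e; rewrite !mul1r invrN1.
Qed.

Lemma SD_div (F : fieldType) (f : F -> F) : SD_map f -> (2:F) != 0 ->
  forall x y, y != 0 -> f (x / y) * f y = f x.
Proof.
move=> hSD h2 x y hy; have f0 := SD_f0 hSD h2; have f1 := SD_f1 hSD h2.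
have [-> | nxy] := eqVneq x y; first by rewrite divff // f1 mul1r.
set t := x / y.
have nt1 : t != 1.
  apply: contra nxy => /eqP ht; apply/eqP.
  by rewrite -[x](divfK hy) -/t ht mul1r.
have [hd e] := hSD x y nxy.
have [_ e2] := hSD t 1 nt1.
have hxy : x - y != 0 by rewrite subr_eq0.
have ht1 : t - 1 != 0 by rewrite subr_eq0.
rewrite (_ : (x + y) / (x - y) = (t + 1) / (t - 1)) in e; last first.
  by rewrite /t; field; rewrite hy mulN1r hxy.
rewrite e2 f1 in e.
have fy0 : f y != 0 by rewrite -f0; have [] := hSD y 0 hy.
have ha : f t - 1 != 0 by rewrite subr_eq0 -f1; have [] := hSD t 1 nt1.
have hb : f x - f y != 0 by rewrite subr_eq0.
move/eqP: e; rewrite eqr_div // => /eqP E.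
have : 2 * (f x - f t * f y) = 0.
  have -> : 2 * (f x - f t * f y) = (f t + 1) * (f x - f y) - (f x + f y) * (f t - 1) by ring.
  by rewrite E subrr.
move/eqP; rewrite mulf_eq0 (negbTE h2) /= subr_eq0 => /eqP ->; by [].
Qed.

Lemma SD_mul (F : fieldType) (f : F -> F) : SD_map f -> (2:F) != 0 ->
  forall x y, f (x * y) = f x * f y.
Proof.
move=> hSD h2 x y; have f0 := SD_f0 hSD h2.
have [-> | hy] := eqVneq y 0; first by rewrite mulr0 f0 mulr0.
by rewrite -(SD_div hSD h2 (x * y) hy) mulfK.
Qed.

Lemma SD_E (F : fieldType) (f : F -> F) : SD_map f -> (2:F) != 0 ->
  forall x, f (x + 1) * (f x - 1) = f (x - 1) * (f x + 1).
Proof.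
move=> hSD h2 x; have f0 := SD_f0 hSD h2; have f1 := SD_f1 hSD h2.
have [-> | hx] := eqVneq x 1; first by rewrite f1 subrr mulr0 f0 mul0r.
have [hd e] := hSD x 1 hx.
have hx1 : x - 1 != 0 by rewrite subr_eq0.
have hf : f x - 1 != 0 by rewrite subr_eq0 -f1.
rewrite f1 in e.
rewrite -(SD_div hSD h2 (x + 1) hx1) e.
by field.
Qed.

Lemma SD_opp (F : fieldType) (f : F -> F) : SD_map f -> (2:F) != 0 ->
  forall x, f (- x) = - f x.
Proof.
move=> hSD h2 x.
by rewrite -mulN1r SD_mul // SD_fm1 // mulN1r.
Qed.

Lemma SD_f2 (F : fieldType) (f : F -> F) : SD_map f -> (2:F) != 0 -> (3:F) != 0 ->
  f 2 = 2 \/ f 2 * f 2 = -1.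
Proof.
move=> hSD h2 h3; have f0 := SD_f0 hSD h2; have f1 := SD_f1 hSD h2.
have fm1 := SD_fm1 hSD h2.
have E := SD_E hSD h2; have fM := SD_mul hSD h2.
have e2 := E 2; have e4 := E 4; have e5 := E 5.
have n1 : (2:F) + 1 = 3 by ring.
have n2 : (2:F) - 1 = 1 by ring.
have n3 : (4:F) + 1 = 5 by ring.
have n4 : (4:F) - 1 = 3 by ring.
have n5 : (4:F) = 2 * 2 by ring.
have n6 : (5:F) + 1 = 2 * 3 by ring.
have n7 : (5:F) - 1 = 2 * 2 by ring.
rewrite n1 n2 f1 in e2.
rewrite n3 n4 n5 fM in e4.
rewrite n6 n7 !fM in e5.
set c := f 2 in e2 e4 e5 *; set d := f 3 in e2 e4 e5; set e := f 5 in e4 e5.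
have D2 : d * (c - 1) - 1 * (c + 1) = 0 by rewrite e2 subrr.
have D4 : e * (c * c - 1) - d * (c * c + 1) = 0 by rewrite e4 subrr.
have D5 : c * d * (e - 1) - c * c * (e + 1) = 0 by rewrite e5 subrr.
have key : 2 * c * c * (c + 1) * ((c * c + 1) * (c - 2)) =
  c * ((c - 1) * (c - 1) * (d - c) * (e * (c * c - 1) - d * (c * c + 1)) +
       ((c - 1) * (d * (c * c + 1) - c * c + 1) + (c * c + 1) * (- c * c + 2 * c + 1)) *
         (d * (c - 1) - 1 * (c + 1)))
  - (c - 1) * (c - 1) * (c * c - 1) * (c * d * (e - 1) - c * c * (e + 1)) by ring.
rewrite D2 D4 D5 !mulr0 !addr0 subr0 in key.
have c0 : c != 0 by rewrite -f0; have [] := hSD 2 0 h2.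
have c1 : c + 1 != 0.
  rewrite -[1]opprK subr_eq0 -fm1; have [] // := hSD 2 (-1).
  by rewrite -subr_eq0 opprK n1.
move: key; rewrite mulr0 => /eqP; rewrite !mulf_eq0 (negbTE h2) (negbTE c0) (negbTE c1) /=.
by rewrite subr_eq0 addr_eq0 => /orP [/eqP -> | /eqP ->]; [right | left].
Qed.

Lemma SD_K (F : fieldType) (f : F -> F) : SD_map f -> (2:F) != 0 ->
  forall y, y != 0 -> y != -1 ->
  f 2 * (f (y + 1) * f (y + 1) * f (y + 1)) - f 2 * (f (y + 1) * f (y + 1))
  - f 2 * (f y * f y) * f (y + 1) - f 2 * (f y * f y) - 2 * f y = 0.
Proof.
move=> hSD h2 y hy0 hy1; have f0 := SD_f0 hSD h2; have f1 := SD_f1 hSD h2.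
have E := SD_E hSD h2; have fM := SD_mul hSD h2.
have e1 := E (2 * y + 1); have e2 := E (y + 1); have e3 := E (2 * y + 1 + 1 + 1);
have e4 := E (2 * (y + 1)).
have n1 : 2 * y + 1 + 1 = 2 * (y + 1) by ring.
have n2 : 2 * y + 1 - 1 = 2 * y by ring.
have n3 : y + 1 - 1 = y by ring.
have n4 : 2 * y + 1 + 1 + 1 + 1 = 2 * (y + 1 + 1) by ring.
have n5 : 2 * y + 1 + 1 + 1 - 1 = 2 * (y + 1) by ring.
have n6 : 2 * (y + 1) + 1 = 2 * y + 1 + 1 + 1 by ring.
have n7 : 2 * (y + 1) - 1 = 2 * y + 1 by ring.
rewrite n1 n2 !fM in e1.
rewrite n3 in e2.
rewrite n4 n5 !fM in e3.
rewrite n6 n7 !fM in e4.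
set a := f y in e1 e2 e3 e4 *; set b := f (y + 1) in e1 e2 e3 e4 *.
set c := f 2 in e1 e2 e3 e4 *; set u := f (2 * y + 1) in e1 e4.
set v := f (2 * y + 1 + 1 + 1) in e3 e4; set w := f (y + 1 + 1) in e2 e3.
have D1 : c * b * (u - 1) - c * a * (u + 1) = 0 by rewrite e1 subrr.
have D2 : w * (b - 1) - a * (b + 1) = 0 by rewrite e2 subrr.
have D3 : c * w * (v - 1) - c * b * (v + 1) = 0 by rewrite e3 subrr.
have D4 : v * (c * b - 1) - u * (c * b + 1) = 0 by rewrite e4 subrr.
have key : c * 2 * b * (c * (b * b * b) - c * (b * b) - c * (a * a) * b - c * (a * a) - 2 * a) =
  c * (b - a) * (w - b) * (b - 1) * (v * (c * b - 1) - u * (c * b + 1))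
  - (b - a) * (b - 1) * (c * b - 1) * (c * w * (v - 1) - c * b * (v + 1))
  + (w - b) * (b - 1) * (c * b + 1) * (c * b * (u - 1) - c * a * (u + 1))
  - c * ((b - a) * (c * b - 1) - (c * b + 1) * (a + b)) * (w * (b - 1) - a * (b + 1)) by ring.
rewrite D1 D2 D3 D4 !mulr0 !subr0 !addr0 in key.
have c0 : c != 0 by rewrite -f0; have [] := hSD 2 0 h2.
have b0 : b != 0.
  rewrite -f0; have [] // := hSD (y + 1) 0.
  by rewrite addr_eq0.
by move/eqP: key; rewrite !mulf_eq0 (negbTE h2) (negbTE c0) (negbTE b0) /= => /eqP.
Qed.


Definition PF (F : fieldType) (y : F) := exists n : nat, y = n%:R.

Lemma PF_nat (F : fieldType) (n : nat) : PF (n%:R : F).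
Proof. by exists n. Qed.

Lemma PF_add (F : fieldType) (x y : F) : PF x -> PF y -> PF (x + y).
Proof. by move=> [m ->] [n ->]; exists (m + n)%N; rewrite natrD. Qed.

Lemma PF_opp (F : fieldType) (p : nat) : p \in [pchar F] ->
  forall y : F, PF y -> PF (- y).
Proof.
move=> hp y [n ->]; exists (n * (p - 1))%N.
have p0 : (0 < p)%N by rewrite prime_gt0 // (pcharf_prime hp).
apply/eqP; rewrite eq_sym -addr_eq0 -natrD.
have -> : (n * (p - 1) + n = n * p)%N by nia.
by rewrite natrM (pcharf0 hp) mulr0.
Qed.

Lemma PF_half (F : fieldType) (p : nat) : p \in [pchar F] -> p != 2%N ->
  forall y : F, 2 * y + 1 = 0 -> PF y.
Proof.
move=> hp hp2 y hy.
have pr := pcharf_prime hp.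
have op : odd p by case: (even_prime pr) => // e; rewrite e in hp2.
exists (p./2).
have h2 : (2:F) != 0.
  apply/negP => /eqP h; have : (p %| 2)%N by rewrite (dvdn_pcharf hp) h.
  move/(@dvdn_leq _ 2 (ltn0Sn 1)); have := prime_gt1 pr; move: hp2 => /eqP; lia.
apply: (mulfI h2).
have e : (p = (p./2).*2 + 1)%N by rewrite -{1}(odd_double_half p) op addnC.
have hk : (p./2)%:R * 2 = -1 :> F.
  have : (p%:R : F) = 0 by rewrite (pcharf0 hp).
  by rewrite {1}e natrD -muln2 natrM => /eqP; rewrite addr_eq0 => /eqP.
rewrite [RHS]mulrC hk; apply/eqP; by rewrite -addr_eq0 hy.
Qed.

Lemma SD_NA (F : fieldType) (f : F -> F) : SD_map f -> (2:F) != 0 ->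
  (forall y : F, PF y -> PF (- y)) -> (forall y : F, 2 * y + 1 = 0 -> PF y) ->
  f 2 = 2 -> forall y, ~ PF y ->
  f (y + 1) = f y + 1 \/
  (f (y + 1) = f y - 1 /\ 2 * (f y * f y) - 2 * f y + 1 = 0).
Proof.
move=> hSD h2 hopp hhalf hc y ny.
have finj := SD_inj hSD.
have fo := SD_opp hSD h2.
have y0 : y != 0 by apply/eqP => e; apply: ny; exists 0%N; rewrite e.
have y1 : y != -1 by apply/eqP => e; apply: ny; rewrite e; apply: hopp; exists 1%N.
have K1 := SD_K hSD h2 y0 y1.
have z0 : - (y + 1) != 0 by rewrite oppr_eq0 -[1]opprK subr_eq0.
have z1 : - (y + 1) != -1 by rewrite eqr_opp -subr_eq0 addrK.
have K2 := SD_K hSD h2 z0 z1.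
rewrite (_ : - (y + 1) + 1 = - y) in K2; last by ring.
rewrite !fo hc in K1 K2.
set a := f y in K1 K2 *; set b := f (y + 1) in K1 K2 *.
have N1 : 2 * ((b - a - 1) * (b * b + a * b + a)) = 0 by rewrite -K1; ring.
have N2 : 2 * ((b - a - 1) * (a * a + a * b - b)) = 0 by rewrite -K2; ring.
move/eqP: N1; rewrite mulf_eq0 (negbTE h2) /= mulf_eq0 subr_eq0 subr_eq addrC.
case/orP => [/eqP -> | /eqP N1]; first by left.
move/eqP: N2; rewrite mulf_eq0 (negbTE h2) /= mulf_eq0 subr_eq0 subr_eq addrC.
case/orP => [/eqP -> | /eqP N2]; first by left.
right.
have : (b + a) * (b - a + 1) = 0 by rewrite -[RHS](subrr 0) -{1}N1 -N2; ring.
move/eqP; rewrite mulf_eq0 => /orP [/eqP hba | /eqP hba].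
  exfalso; apply: ny; apply: hhalf.
  have : f (y + 1) = f (- y) by rewrite fo -/b -/a; apply/eqP; rewrite -addr_eq0 hba.
  move/finj => e; rewrite (_ : 2 * y + 1 = (y + 1) - - y); last by ring.
  by rewrite e subrr.
have hb : b = a - 1 by apply/eqP; rewrite -subr_eq0 -hba; apply/eqP; ring.
split => //.
by rewrite -N1 hb; ring.
Qed.

Lemma SD_nat (F : fieldType) (f : F -> F) : SD_map f -> (2:F) != 0 ->
  f 2 = 2 -> forall n : nat, f n%:R = n%:R.
Proof.
move=> hSD h2 hc.
have f0 := SD_f0 hSD h2; have f1 := SD_f1 hSD h2; have E := SD_E hSD h2.
suff H : forall n : nat, f n%:R = n%:R /\ f n.+1%:R = n.+1%:R by move=> n; case: (H n).
elim => [|n [IH1 IH2]]; first by rewrite f0 f1.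
split => //.
have := E n.+1%:R.
have q1 : (n.+1%:R : F) + 1 = n.+2%:R by rewrite natr1.
have q2 : (n.+1%:R : F) - 1 = n%:R by rewrite -natr1 addrK.
have q3 : (n.+2%:R : F) = n%:R + 2 by rewrite -[n.+2]addn2 natrD.
rewrite q1 q2 IH1 IH2 q2.
have [hn | hn] := eqVneq (n%:R : F) 0.
  by move=> _; rewrite q3 hn add0r.
move=> e; apply: (mulIf hn); rewrite e mulrC; congr (_ * _).
by rewrite q1.
Qed.

Lemma SD_add2 (F : fieldType) (f : F -> F) : SD_map f -> (2:F) != 0 ->
  (forall y : F, PF y -> PF (- y)) -> (forall y : F, 2 * y + 1 = 0 -> PF y) ->
  f 2 = 2 -> forall x y, f (x + y) = f x + f y.
Proof.
move=> hSD h2 hopp hhalf hc.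
have finj := SD_inj hSD; have f0 := SD_f0 hSD h2; have f1 := SD_f1 hSD h2.
have fM := SD_mul hSD h2.
have A : forall z, f (z + 1) = f z + 1.
  move=> z; have [[n ->] | nz] := pselect (PF z).
    by rewrite natr1 !(SD_nat hSD h2 hc) natr1.
  have [// | [hb ha]] := SD_NA hSD h2 hopp hhalf hc nz.
  have nz1 : ~ PF (z + 1).
    move=> hz; apply: nz; rewrite (_ : z = z + 1 + - 1); last by ring.
    by apply: PF_add => //; apply: hopp; exists 1%N.
  have [hw | [hw ha2]] := SD_NA hSD h2 hopp hhalf hc nz1.
    exfalso; move: hw; rewrite hb subrK => /finj.
    have q : z + 1 + 1 - z = 2 by ring.
    by move/eqP; rewrite -subr_eq0 q (negbTE h2).
  exfalso; apply: nz.
  have : 2 * 2 * (f z - 1) = 0.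
    rewrite hb in ha2.
    have -> : 2 * 2 * (f z - 1) = (2 * (f z * f z) - 2 * f z + 1) - (2 * ((f z - 1) * (f z - 1)) - 2 * (f z - 1) + 1) by ring.
    by rewrite ha ha2 subrr.
  move/eqP; rewrite !mulf_eq0 (negbTE h2) /= subr_eq0 -f1 => /eqP /finj ->.
  by exists 1%N.
move=> x y; have [-> | hy] := eqVneq y 0; first by rewrite addr0 f0 addr0.
have q : x + y = (x / y + 1) * y by field.
rewrite q.
by rewrite fM A mulrDl mul1r -fM divfK.
Qed.

Lemma SD_m2 (F : fieldType) (f : F -> F) : SD_map f -> (2:F) != 0 ->
  (forall y : F, PF y -> PF (- y)) -> (forall y : F, 2 * y + 1 = 0 -> PF y) ->
  (5:F) = 0 -> f 2 = -2 -> forall y : F, ~ PF y -> False.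
Proof.
move=> hSD h2 hopp hhalf h5 hc y ny.
have finj := SD_inj hSD; have f1 := SD_f1 hSD h2; have fo := SD_opp hSD h2.
have fm1 := SD_fm1 hSD h2.
have y0 : y != 0 by apply/eqP => e; apply: ny; exists 0%N; rewrite e.
have y1 : y != -1 by apply/eqP => e; apply: ny; rewrite e; apply: hopp; exists 1%N.
have K1 := SD_K hSD h2 y0 y1.
have z0 : - (y + 1) != 0 by rewrite oppr_eq0 -[1]opprK subr_eq0.
have z1 : - (y + 1) != -1 by rewrite eqr_opp -subr_eq0 addrK.
have K2 := SD_K hSD h2 z0 z1.
have q : - (y + 1) + 1 = - y by ring.
rewrite q in K2.
rewrite !fo hc in K1 K2.
set a := f y in K1 K2 *; set b := f (y + 1) in K1 K2 *.
have N : 2 * ((a + b) * ((a - b) * (a - b) + 1)) = 0.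
  by rewrite -[RHS](subrr 0) -{1}K2 -K1; ring.
move/eqP: N; rewrite !mulf_eq0 (negbTE h2) /= => /orP [/eqP hab | /eqP hab].
  apply: ny; apply: hhalf.
  have : f (y + 1) = f (- y) by rewrite fo -/b -/a; apply/eqP; rewrite -addr_eq0 addrC hab.
  move/finj => e; rewrite (_ : 2 * y + 1 = (y + 1) - - y); last by ring.
  by rewrite e subrr.
have E5 : forall t : F, t * 5 = 0 by move=> t; rewrite h5 mulr0.
have : (b - a - 2) * (b - a + 2) = 0.
  have -> : (b - a - 2) * (b - a + 2) = ((a - b) * (a - b) + 1) - 1 * 5 by ring.
  by rewrite hab E5 subrr.
have PFy : forall n : nat, y = n%:R \/ y = - n%:R -> False.
  move=> n [e | e]; apply: ny; rewrite e; [exact: PF_nat | apply: hopp; exact: PF_nat].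
move/eqP; rewrite mulf_eq0 => /orP [/eqP hb | /eqP hb].
  have hb' : b = a + 2 by apply/eqP; rewrite -subr_eq0 -hb; apply/eqP; ring.
  rewrite hb' in K1.
  have : - (2 * 2 * ((a - 1) * (a - 2))) = 0.
    by rewrite -[RHS](addr0 0) -{1}K1 -(E5 (6 * a)); ring.
  move/eqP; rewrite oppr_eq0 !mulf_eq0 (negbTE h2) /= !subr_eq0 => /orP [/eqP ha | /eqP ha].
    by apply: (PFy 1%N); left; apply: finj; rewrite -/a ha f1.
  apply: (PFy 2%N); right; apply: finj; rewrite -/a ha fo hc opprK //.
have hb' : b = a - 2 by apply/eqP; rewrite -subr_eq0 -hb; apply/eqP; ring.
rewrite hb' in K1.
have : 2 * ((a + 1) * (a + 2)) = 0.
  by rewrite -[RHS](addr0 0) -{1}K1 -(E5 (14 * a - 2 * ((a + 1) * (a + 2)))); ring.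
move/eqP; rewrite !mulf_eq0 (negbTE h2) /= !addr_eq0 => /orP [/eqP ha | /eqP ha].
  by apply: (PFy 1%N); right; apply: finj; rewrite -/a ha fm1.
by apply: (PFy 2%N); left; apply: finj; rewrite -/a ha hc.
Qed.

Lemma two_neq0 (F : fieldType) (p : nat) : p \in [pchar F] -> p != 2%N -> (2:F) != 0.
Proof.
move=> hp hp2; have pr := pcharf_prime hp.
apply/negP => /eqP h; have : (p %| 2)%N by rewrite (dvdn_pcharf hp) h.
move/(@dvdn_leq _ 2 (ltn0Sn 1)); have := prime_gt1 pr; move: hp2 => /eqP; lia.
Qed.

Lemma SD_main (F : fieldType) (f : F -> F) : odd_char F -> SD_map f ->
  ((5:F) = 0 /\ forall y : F, PF y) \/ (forall x y, f (x + y) = f x + f y).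
Proof.
move=> [p [hp hp2]] hSD.
have h2 := two_neq0 hp hp2.
have hopp := PF_opp hp; have hhalf := PF_half hp hp2.
have fm1 := SD_fm1 hSD h2; have fM := SD_mul hSD h2; have finj := SD_inj hSD.
have [h3 | h3] := eqVneq (3:F) 0.
  right; apply: SD_add2 => //.
  have q : (2:F) + 1 = 3 by ring.
  have e : (2:F) = -1 by apply/eqP; rewrite -subr_eq0 opprK q h3.
  by rewrite e fm1.
have [hc | hc] := SD_f2 hSD h2 h3; first by right; apply: SD_add2.
have h5 : (5:F) = 0.
  have : f (2 * 2) = f (-1) by rewrite fM hc fm1.
  move/finj => e.
  have -> : (5:F) = 2 * 2 + 1 by ring.
  by rewrite e addNr.
have : (f 2 - 2) * (f 2 + 2) = 0.
  have -> : (f 2 - 2) * (f 2 + 2) = f 2 * f 2 + 1 - 5 by ring.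
  by rewrite hc h5 addNr subrr.
move/eqP; rewrite mulf_eq0 => /orP [/eqP e | /eqP e].
  by right; apply: SD_add2 => //; apply/eqP; rewrite -subr_eq0 e.
have hc2 : f 2 = -2 by apply/eqP; rewrite -subr_eq0 opprK e.
have [all | nall] := pselect (forall y : F, PF y); first by left.
move/existsNP: nall => [y ny].
by exfalso; apply: (SD_m2 hSD h2 hopp hhalf h5 hc2 ny).
Qed.


Definition QF5 (F : fieldType) := (5:F) = 0 /\ forall y : F, PF y.

Lemma char5 (F : fieldType) : (5:F) = 0 -> (5%N \in [pchar F]).
Proof. by move=> h5; apply/andP; split => //; rewrite h5. Qed.

Lemma fermat5 (F : fieldType) : QF5 F -> forall x : F, x ^+ 5 = x.
Proof.
move=> [h5 hPF] x; have [n ->] := hPF x.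
by rewrite -(pFrobenius_autE (char5 h5)) pFrobenius_aut_nat.
Qed.

Lemma cube_SD (F : fieldType) : QF5 F -> in_SD (fun x : F => x ^+ 3).
Proof.
move=> hQ; have fe := fermat5 hQ.
have c9 : forall x : F, (x ^+ 3) ^+ 3 = x.
  by move=> x; rewrite -exprM (_ : (3 * 3 = 5 + 4)%N) // exprD fe -exprS fe.
have cinj : forall x y : F, x ^+ 3 = y ^+ 3 -> x = y.
  by move=> x y e; rewrite -(c9 x) e c9.
split; last by move=> y; exists (y ^+ 3); rewrite c9.
move=> x y nxy.
have hc : x ^+ 3 != y ^+ 3 by apply: contra nxy => /eqP /cinj ->.
split => //.
have h1 : x - y != 0 by rewrite subr_eq0.
have h3 : x ^+ 3 - y ^+ 3 != 0 by rewrite subr_eq0.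
rewrite expr_div_n; apply/eqP; rewrite eqr_div ?expf_neq0 //; apply/eqP.
apply/eqP; rewrite -subr_eq0; apply/eqP.
have -> : (x + y) ^+ 3 * (x ^+ 3 - y ^+ 3) - (x ^+ 3 + y ^+ 3) * (x - y) ^+ 3
   = 6 * (x ^+ 5 * y - x * y ^+ 5) by ring.
by rewrite !fe subrr mulr0.
Qed.

Lemma cube_not_aut (F : fieldType) : QF5 F -> ~ is_field_aut (fun x : F => x ^+ 3).
Proof.
move=> [h5 _] [hadd _ _ _].
have := hadd 1 1; rewrite !expr1n => e.
have : (1:F) = 0.
  have -> : (1:F) = (1 + 1) ^+ 3 - (1 + 1) - 5 by ring.
  by rewrite e h5 subrr subr0.
by move/eqP; rewrite oner_eq0.
Qed.

Lemma aut_SD (F : fieldType) (f : F -> F) : is_field_aut f -> in_SD f.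
Proof.
move=> [hadd hmul h1 [g fg gf]].
have f0 : f 0 = 0.
  have e := hadd 0 0; rewrite addr0 in e.
  by apply: (addrI (f 0)); rewrite addr0 -e.
have fN : forall x, f (- x) = - f x.
  by move=> x; apply/eqP; rewrite -addr_eq0 -hadd addNr f0.
have fV : forall x, f (x^-1) = (f x)^-1.
  move=> x; have [-> | hx] := eqVneq x 0; first by rewrite invr0 f0 invr0.
  have hfx : f x != 0 by apply: contra hx => /eqP e; rewrite -(fg x) e -{1}f0 fg.
  by apply: (mulfI hfx); rewrite -hmul !mulfV // h1.
have finj : injective f by apply: (can_inj fg).
split; last by move=> y; exists (g y).
move=> x y nxy; split; first by apply: contra nxy => /eqP /finj ->.
by rewrite hmul fV hadd hadd fN.
Qed.

Lemma add_SD_aut (F : fieldType) (f : F -> F) : (2:F) != 0 -> in_SD f ->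
  (forall x y, f (x + y) = f x + f y) -> is_field_aut f.
Proof.
move=> h2 [hSD hsurj] hadd.
split => //; first exact: SD_mul; first exact: SD_f1.
have hs : forall y, exists x, f x == y by move=> y; have [x e] := hsurj y; exists x; rewrite e.
exists (fun y => xchoose (hs y)).
  by move=> x; apply: (SD_inj hSD); apply/eqP; exact: (xchooseP (hs (f x))).
by move=> y; apply/eqP; exact: (xchooseP (hs y)).
Qed.

Definition P1F (F : fieldType) := exists f : 'F_5 -> F,
      [/\ forall x y, f (x + y) = f x + f y,
          forall x y, f (x * y) = f x * f y,
          f 1 = 1 & bijective f].

Lemma P1_Q (F : fieldType) : P1F F -> QF5 F.
Proof.
move=> [f [hadd hmul h1 [g fg gf]]].
have f0 : f 0 = 0.
  have e := hadd 0 0; rewrite addr0 in e.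
  by apply: (addrI (f 0)); rewrite addr0 -e.
have fn : forall n : nat, f n%:R = n%:R.
  elim => [|n IH]; first by rewrite f0.
  by rewrite -!natr1 hadd IH h1.
have z5 : (5%:R : 'F_5) = 0 by apply/eqP.
split; first by rewrite -(fn 5%N) z5 f0.
move=> y; exists (val (g y)).
by rewrite -fn natr_Zp gf.
Qed.

Lemma natr_mod5 (F : fieldType) : (5:F) = 0 -> forall m : nat, (m %% 5)%:R = m%:R :> F.
Proof.
move=> h5 m; rewrite {2}(divn_eq m 5) natrD natrM.
by rewrite h5 mulr0 add0r.
Qed.

Lemma natr_inj5 (F : fieldType) : (5:F) = 0 -> forall a b : nat, (a < 5)%N -> (b < 5)%N ->
  a%:R = b%:R :> F -> a = b.
Proof.
move=> h5 a b ha hb e.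
have ch := char5 h5.
wlog ab : a b ha hb e / (a <= b)%N.
  move=> H; case: (leqP a b) => hab; first exact: H.
  by apply/esym; apply: H => //; exact: ltnW.
have : (5 %| b - a)%N by rewrite (dvdn_pcharf ch) natrB // e subrr.
have [z | nz] := eqVneq (b - a)%N 0%N; first by move=> _; lia.
rewrite -lt0n in nz; move/(dvdn_leq nz); lia.
Qed.

Lemma Q_P1 (F : fieldType) : QF5 F -> P1F F.
Proof.
move=> [h5 hPF].
have m5 := natr_mod5 h5.
exists (fun x : 'F_5 => (val x)%:R); split.
- by move=> x y; rewrite (_ : val (x + y) = ((val x + val y) %% 5)%N) // m5 natrD.
- by move=> x y; rewrite (_ : val (x * y) = ((val x * val y) %% 5)%N) // m5 natrM.
- by [].
have hs : forall y : F, exists n : nat, y == n%:R by move=> y; have [n e] := hPF y; exists n; rewrite e.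
exists (fun y => inZp (xchoose (hs y))).
  move=> x; apply: val_inj => /=.
  apply: (natr_inj5 h5); rewrite ?ltn_pmod // ?(ltn_ord x) //.
  by rewrite m5; apply/eqP; rewrite eq_sym; exact: (xchooseP (hs _)).
move=> y /=; rewrite m5; apply/esym/eqP; exact: (xchooseP (hs y)).
Qed.

Definition P4F (F : fieldType) := exists i : F, i ^+ 2 = -1 /\
              forall x : F, x != 0 -> exists n : nat, x = i ^+ n.

Lemma PF_mul (F : fieldType) (x y : F) : PF x -> PF y -> PF (x * y).
Proof. by move=> [m ->] [n ->]; exists (m * n)%N; rewrite natrM. Qed.

Lemma Q_P4 (F : fieldType) : QF5 F -> P4F F.
Proof.
move=> [h5 hPF]; exists 2; split.
  have -> : (2:F) ^+ 2 = -1 + 5 by ring.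
  by rewrite h5 addr0.
move=> x hx; have [n e] := hPF x.
rewrite -(natr_mod5 h5) in e.
have : (n %% 5 < 5)%N by rewrite ltn_pmod.
move: e; case: (n %% 5)%N => [|[|[|[|[|k]]]]] // e _.
- by rewrite e eqxx in hx.
- by exists 0%N; rewrite e expr0.
- by exists 1%N; rewrite e expr1.
- exists 3%N; rewrite e; apply/eqP; rewrite -subr_eq0; apply/eqP.
  have -> : 3%:R - (2:F) ^+ 3 = - 5 by ring.
  by rewrite h5 oppr0.
- exists 2%N; rewrite e; apply/eqP; rewrite -subr_eq0; apply/eqP.
  have -> : 4%:R - (2:F) ^+ 2 = 0 * 5 by ring.
  by rewrite mul0r.
Qed.

Lemma P4_Q (F : fieldType) : odd_char F -> P4F F -> QF5 F.
Proof.
move=> [p [hp hp2]] [i [hi hgen]].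
have h2 := two_neq0 hp hp2.
have i4 : i ^+ 4 = 1 by rewrite (_ : 4 = 2 * 2)%N // exprM hi sqrrN expr1n.
have x4 : forall x : F, x != 0 -> x ^+ 4 = 1.
  by move=> x hx; have [n ->] := hgen x hx; rewrite -exprM mulnC exprM i4 expr1n.
have ni : 1 + i != 0.
  apply/negP => /eqP e.
  have ei : i = -1 by apply/eqP; rewrite -addr_eq0 addrC e.
  move: hi; rewrite ei sqrrN expr1n => /eqP; rewrite -subr_eq0 opprK.
  by rewrite (negbTE h2).
have h5 : (5:F) = 0.
  have := x4 _ ni.
  have -> : (1 + i) ^+ 4 = -4 + (i ^+ 2 + 1) * (i ^+ 2 + 4 * i + 5) by ring.
  rewrite hi addNr mul0r addr0 => e.
  have -> : (5:F) = 1 - -4 by ring.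
  by rewrite e subrr.
split => //.
have hopp := PF_opp hp.
have Pi : PF i.
  have : (i - 2) * (i + 2) = 0.
    have -> : (i - 2) * (i + 2) = (i ^+ 2 + 1) - 5 by ring.
    by rewrite hi addNr h5 subrr.
  move/eqP; rewrite mulf_eq0 => /orP [/eqP e | /eqP e].
    by exists 2%N; apply/eqP; rewrite -subr_eq0 e.
  have -> : i = - 2 by apply/eqP; rewrite -addr_eq0 e.
  by apply: hopp; exists 2%N.
move=> y; have [-> | hy] := eqVneq y 0; first by exists 0%N.
have [n ->] := hgen y hy.
elim: n => [|n IH]; first by exists 1%N; rewrite expr0.
by rewrite exprS; apply: PF_mul.
Qed.

Lemma sq_flip_sq (F : fieldType) (x : F) : is_square x -> sq_flip x = x.
Proof. by move=> h; rewrite /sq_flip asboolT. Qed.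

Lemma sq_flip_nsq (F : fieldType) (x : F) : ~ is_square x -> sq_flip x = - x.
Proof. by move=> h; rewrite /sq_flip asboolF. Qed.

Lemma sq_flip_cube (F : fieldType) : QF5 F -> forall x : F, sq_flip x = x ^+ 3.
Proof.
move=> hQ x; have fe := fermat5 hQ; have h5 := hQ.1.
have [[y hy] | ns] := pselect (is_square x).
  rewrite sq_flip_sq; last by exists y.
  by rewrite -hy -exprM (_ : (2 * 3 = 5 + 1)%N) // exprD fe expr1 -expr2.
rewrite sq_flip_nsq //.
have x0 : x != 0 by apply/eqP => e; apply: ns; exists 0; rewrite e expr0n.
have : x * ((x ^+ 2 - 1) * (x ^+ 2 + 1)) = 0.
  have -> : x * ((x ^+ 2 - 1) * (x ^+ 2 + 1)) = x ^+ 5 - x by ring.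
  by rewrite fe subrr.
move/eqP; rewrite !mulf_eq0 (negbTE x0) /= => /orP [/eqP e | /eqP e].
  exfalso.
  have : (x - 1) * (x + 1) = 0 by rewrite -e; ring.
  move/eqP; rewrite mulf_eq0 => /orP [/eqP e1 | /eqP e1].
    by apply: ns; exists 1; rewrite expr1n; apply/eqP; rewrite eq_sym -subr_eq0 e1.
  apply: ns; exists 2.
  have -> : x = -1 by apply/eqP; rewrite -addr_eq0 e1.
  have -> : (2:F) ^+ 2 = -1 + 5 by ring.
  by rewrite h5 addr0.
have -> : x ^+ 3 = x * (x ^+ 2 + 1) - x by ring.
by rewrite e mulr0 sub0r.
Qed.

Lemma exists_nsq (F : fieldType) : (2:F) != 0 -> finite_field F ->
  exists w : F, ~ is_square w.
Proof.
move=> h2 [s hs].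
have [// | nall] := pselect (exists w : F, ~ is_square w).
have allsq : forall w : F, is_square w.
  by move=> w; apply: contrapT => nw; apply: nall; exists w.
set s' := undup s.
have us : uniq s' by exact: undup_uniq.
have ms : forall x, x \in s' by move=> x; rewrite mem_undup.
have n1 : (-1 : F) != 1.
  apply/negP => /eqP e; move: h2.
  have -> : (2:F) = 1 - -1 by ring.
  by rewrite e subrr eqxx.
set t := rem (-1) s'.
have mt : forall x, x != -1 -> x \in t.
  by move=> x hx; rewrite /t (mem_rem_uniq _ us) inE hx ms.
have sub : {subset s' <= map (fun y => y ^+ 2) t}.
  move=> w _; have [y hy] := allsq w.
  have [ey | ny] := eqVneq y (-1).
    rewrite -hy ey sqrrN; apply: map_f; apply: mt; by rewrite eq_sym.
  by rewrite -hy; apply: map_f; exact: mt.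
have := uniq_leq_size us sub.
rewrite size_map /t size_rem ?ms //.
have : (0 < size s')%N by rewrite lt0n size_eq0; apply/eqP => e; move: (ms 0); rewrite e.
move=> h0 h1; exfalso; move: h0 h1; case: (size s') => // n _ /= h; by rewrite ltnn in h.
Qed.

Lemma P3_Q (F : fieldType) : odd_char F -> finite_field F -> SD_map (@sq_flip F) -> QF5 F.
Proof.
move=> hodd hfin hSD.
have [p [hp hp2]] := hodd; have h2 := two_neq0 hp hp2.
case: (SD_main hodd hSD) => // hadd.
exfalso; have [w nw] := exists_nsq h2 hfin.
have e := hadd w 1.
have s1 : is_square (1:F) by exists 1; rewrite expr1n.
rewrite (sq_flip_nsq nw) (sq_flip_sq s1) in e.
have [sq | nsq] := pselect (is_square (w + 1)).
  rewrite (sq_flip_sq sq) in e.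
  have : 2 * w = 0 by rewrite -[RHS](subrr (w + 1)) {2}e; ring.
  move/eqP; rewrite mulf_eq0 (negbTE h2) /= => /eqP w0.
  by apply: nw; exists 0; rewrite w0 expr0n.
rewrite (sq_flip_nsq nsq) in e.
move: h2; have -> : (2:F) = (- w + 1) - - (w + 1) by ring.
by rewrite -e subrr eqxx.
Qed.

Unset Implicit Arguments.

Theorem corollary4p1 (F : fieldType) :
  odd_char F -> algebraic_over_prime F ->
  let P1 := exists f : 'F_5 -> F,
      [/\ forall x y, f (x + y) = f x + f y,
          forall x y, f (x * y) = f x * f y,
          f 1 = 1 & bijective f] in
  let P2 := (forall f : F -> F, is_field_aut f -> in_SD f) /\
            (exists f : F -> F, in_SD f /\ ~ is_field_aut f) in
  let P3 := SD_map (@sq_flip F) in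
  let P4 := exists i : F, i ^+ 2 = -1 /\
              forall x : F, x != 0 -> exists n : nat, x = i ^+ n in
  (P1 <-> P2) /\ (P1 <-> P4) /\ (finite_field F -> (P1 <-> P3)).
Proof.
move=> hodd _ P1 P2 P3 P4.
have [p [hp hp2]] := hodd; have h2 := two_neq0 hp hp2.
have E1 : P1 <-> QF5 F by split; [exact: P1_Q | exact: Q_P1].
split; last split.
- rewrite E1; split.
    move=> hQ; split; first exact: aut_SD.
    by exists (fun x => x ^+ 3); split; [exact: cube_SD | exact: cube_not_aut].
  move=> [_ [f [hf nf]]].
  case: (SD_main hodd hf.1) => // hadd.
  by exfalso; apply: nf; exact: add_SD_aut.
- rewrite E1; split; [exact: Q_P4 | exact: P4_Q].
- move=> hfin; rewrite E1; split; last exact: P3_Q.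
  move=> hQ x y nxy.
  rewrite !(sq_flip_cube hQ).
  by have [h _] := cube_SD hQ; apply: h.
Qed.
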